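(* Let $G$ be a finite pseudo reflection group and $\Upsilon=\{\mu_s,\tau_i\}$ admissible parameters. Let $V_G=\bigoplus_{i\in P}\mathbb Cv_i$, $\iota(w)v_i=v_{w(i)}$, and let $p_i\in\mathrm{End}(V_G)$ be defined by $p_i(v_i)=\tau_iv_i$ and $p_i(v_j)=\alpha_{i,j}v_i$ for $j\neq i$, where $\alpha_{i,j}=\sum_{s\in R(i,j)}\mu_s$. Then the assignment $T_w\mapsto\iota(w)$ ($w\in G$), $e_i\mapsto p_i$ ($i\in P$) extends to a representation $B_G(\Upsilon)\to\mathrm{End}(V_G)$.
   Context: $G\subset U(V)$ a finite pseudo reflection group with pseudo reflections $R$, reflecting hyperplanes $\{H_i\}_{i\in P}$, $w(i)$ defined by $H_{w(i)}=w(H_i)$, $R(i,j)=\{s\in R:s(H_j)=H_i\}$, $s_i$ the generator of the pointwise stabilizer $G_i$ of $H_i$ with exceptional eigenvalue $e^{2\pi\sqrt{-1}/|G_i|}$. $H_i\pitchfork H_j$ ($i\ne j$) means $\{k:H_i\cap H_j\subset H_k\}=\{i,j\}$; a codimension-2 edge is crossing if it is $H_i\cap H_j$ with $H_i\pitchfork H_j$, noncrossing otherwise; $V_w$ is the fixed space of $w$. Admissible $\Upsilon=\{\mu_s,\tau_i\}$: $\mu_s\ne0$ constant on conjugacy classes of $R$, $\tau_i$ constant on $G$-orbits of $P$. $B_G(\Upsilon)$: unital $\mathbb C$-algebra generated by $T_w$ ($w\in G$, $T_1=1$) and $e_i$ ($i\in P$) with relations (0) $T_{w_1}T_{w_2}=T_{w_1w_2}$;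 (1) $T_{s_i}e_i=e_iT_{s_i}=e_i$; (1') $T_we_i=e_iT_w=e_i$ if $w(H_i)=H_i$ and $H_i\cap V_w$ is a noncrossing codimension-2 edge; (2) $e_i^2=\tau_ie_i$; (3) $T_we_j=e_iT_w$ if $w(H_j)=H_i$; (4) $e_ie_j=e_je_i$ if $H_i\pitchfork H_j$; (5) $e_ie_j=(\sum_{s\in R(i,j)}\mu_sT_s)e_j=e_i(\sum_{s\in R(i,j)}\mu_sT_s)$ if $i\neq j$, $H_i\cap H_j$ noncrossing, $R(i,j)\ne\emptyset$; (6) $e_ie_j=0$ if $i\ne j$, $H_i\cap H_j$ noncrossing, $R(i,j)=\emptyset$. *)

(* Defs.v *)
From HB Require Import structures.
From mathcomp Require Import all_boot all_order all_fingroup all_solvable all_algebra.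
Set Implicit Arguments. Unset Strict Implicit. Unset Printing Implicit Defensive.
Import Order.TTheory GRing.Theory Num.Theory.
Local Open Scope ring_scope.

(* Conventions:
   - C : numClosedFieldType plays the role of the complex numbers (with
     conjugation Num.conj); V = C^n, vectors are row vectors, subspaces are
     row spaces of square matrices (mxalgebra).
   - The finite group G is given abstractly (gT : finGroupType) together with
     a faithful unitary representation rho : gT -> 'M_n, i.e. G is identified
     with its image in U(V). An element w acts on a (column) vector v by
     rho w *m v; on row vectors/subspaces this reads X |-> X *m (rho w)^T,
     which is a left action. *)

Section PseudoReflection.
Variables (C : numClosedFieldType) (n : nat) (gT : finGroupType).
Variables (G : {group gT}) (rho : gT -> 'M[C]_n).

Definition unitary_mx (A : 'M[C]_n) : bool :=
  A *m (map_mx Num.conj A)^T == 1%:M.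

Definition faithful_unitary_rep : Prop :=
  [/\ rho 1 = 1%:M,
      {in G &, forall x y, rho (x * y)%g = rho x *m rho y},
      {in G &, injective rho} &
      {in G, forall g, unitary_mx (rho g)}].

Definition gact (w : gT) (X : 'M[C]_n) : 'M[C]_n := X *m (rho w)^T.

Definition fixsp (w : gT) : 'M[C]_n := kermx ((rho w)^T - 1%:M).

Definition is_prefl (s : gT) : bool :=
  (s \in G) && (\rank ((rho s)^T - 1%:M) == 1%N).

Definition prefls : {set gT} := [set s | is_prefl s].

Definition pseudo_reflection_group : Prop :=
  faithful_unitary_rep /\ (G : {set gT}) = <<prefls>>%g.

Variables (P : finType) (H : P -> 'M[C]_n).

Definition reflecting_hyperplanes_indexing : Prop :=
  [/\ (forall i j, (H i == H j)%MS -> i = j),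
      (forall i, exists2 s, is_prefl s & (H i == fixsp s)%MS) &
      (forall s, is_prefl s -> exists i, (H i == fixsp s)%MS)].

Definition wact (w : gT) (i : P) : P :=
  odflt i [pick j | (H j == gact w (H i))%MS].

Definition Rset (i j : P) : {set gT} :=
  [set s | is_prefl s && (gact s (H j) == H i)%MS].

Definition Gstab (i : P) : {set gT} :=
  [set g in G | H i *m ((rho g)^T - 1%:M) == 0].

(* e^{2 pi sqrt(-1)/m} = (e^{pi sqrt(-1)/m})^2, with m.-root (-1) = e^{pi sqrt(-1)/m} *)
Definition zeta (m : nat) : C := (m.-root (-1)) ^+ 2.

Definition sgen (i : P) : gT :=
  odflt 1%g [pick g in Gstab i |
     (Gstab i == <[g]>%g) && eigenvalue (rho g)^T (zeta #|Gstab i|)].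

Definition crossing_pair (i j : P) : bool :=
  (i != j) && [forall k, ((H i :&: H j) <= H k)%MS ==> ((k == i) || (k == j))].

Definition edge2 (X : 'M[C]_n) : bool :=
  [exists i, exists j, (i != j) && (X == (H i :&: H j))%MS].

Definition crossing_edge (X : 'M[C]_n) : bool :=
  [exists i, exists j, crossing_pair i j && (X == (H i :&: H j))%MS].

Definition noncrossing_edge (X : 'M[C]_n) : bool :=
  edge2 X && ~~ crossing_edge X.

Variables (mu : gT -> C) (tau : P -> C).

Definition admissible : Prop :=
  [/\ (forall s, is_prefl s -> mu s != 0),
      (forall s g, is_prefl s -> g \in G -> mu (s ^ g)%g = mu s) &
      (forall w i, w \in G -> tau (wact w i) = tau i)].

(* The pair (T, e) of endomorphisms of a space of dimension d satisfies the
   defining relations of B_G(Upsilon); by the universal property of an algebra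
   given by generators and relations, this is exactly a (unital) representation
   B_G(Upsilon) -> 'M_d with T_w |-> T w, e_i |-> e i. *)
Definition BG_rep (d : nat) (T : gT -> 'M[C]_d) (e : P -> 'M[C]_d) : Prop :=
  [/\ T 1%g = 1%:M,
      {in G &, forall w1 w2, T w1 *m T w2 = T (w1 * w2)%g},
      (forall i, T (sgen i) *m e i = e i /\ e i *m T (sgen i) = e i),
      (forall w i, w \in G -> (gact w (H i) == H i)%MS ->
         noncrossing_edge (H i :&: fixsp w)%MS ->
         T w *m e i = e i /\ e i *m T w = e i) &
      [/\
          (forall i, e i *m e i = tau i *: e i),
          (forall w i j, w \in G -> (gact w (H j) == H i)%MS ->
             T w *m e j = e i *m T w),
          (forall i j, crossing_pair i j -> e i *m e j = e j *m e i),
          (forall i j, i != j -> noncrossing_edge (H i :&: H j)%MS ->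
             Rset i j != set0 ->
             e i *m e j = (\sum_(s in Rset i j) mu s *: T s) *m e j /\
             e i *m e j = e i *m (\sum_(s in Rset i j) mu s *: T s)) &
          (forall i j, i != j -> noncrossing_edge (H i :&: H j)%MS ->
             Rset i j = set0 -> e i *m e j = 0)]].

(* V_G = \bigoplus_{i in P} C v_i, basis indexed via enum_val : 'I_#|P| -> P;
   column convention: (M a b) = coefficient of v_a in M v_b. *)
Definition iotaV (w : gT) : 'M[C]_#|P| :=
  \matrix_(a, b) (wact w (enum_val b) == enum_val a)%:R.

Definition alpha (i j : P) : C := \sum_(s in Rset i j) mu s.

Definition pmx (i : P) : 'M[C]_#|P| :=
  \matrix_(a, b) (if enum_val a == i then
                    (if enum_val b == i then tau i else alpha i (enum_val b))
                  else 0).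

End PseudoReflection.

(* Main.v *)
Require Import Defs.
From HB Require Import structures.
From mathcomp Require Import all_boot all_order all_fingroup all_solvable all_algebra.
Set Implicit Arguments. Unset Strict Implicit. Unset Printing Implicit Defensive.
Import Order.TTheory GRing.Theory Num.Theory.
Local Open Scope ring_scope.

Section Proof5p2.
Variables (C : numClosedFieldType) (n : nat) (gT : finGroupType)
    (G : {group gT}) (rho : gT -> 'M[C]_n) (P : finType) (H : P -> 'M[C]_n)
    (mu : gT -> C) (tau : P -> C).
Hypothesis hG : pseudo_reflection_group G rho.
Hypothesis hH : reflecting_hyperplanes_indexing G rho H.
Hypothesis hU : admissible G rho H mu tau.

Local Notation R g := (rho g)^T.
Local Notation wact := (Defs.wact rho H).
Local Notation gact := (Defs.gact rho).
Local Notation fixsp := (Defs.fixsp rho).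
Local Notation is_prefl := (Defs.is_prefl G rho).

Lemma R1 : R 1%g = 1%:M.
Proof. by case: hG => -[-> _ _ _] _; rewrite trmx1. Qed.

Lemma RM x y : x \in G -> y \in G -> R (x * y)%g = R y *m R x.
Proof. by case: hG => -[_ hM _ _] _ hx hy; rewrite hM // trmx_mul. Qed.

Lemma RV g : g \in G -> R g *m R (g^-1)%g = 1%:M.
Proof. by move=> hg; rewrite -RM ?groupV // mulVg R1. Qed.

Lemma RV' g : g \in G -> R (g^-1)%g *m R g = 1%:M.
Proof. by move=> hg; rewrite -RM ?groupV // mulgV R1. Qed.

Lemma Runit g : g \in G -> R g \in unitmx.
Proof. by move=> hg; case: (mulmx1_unit (RV hg)). Qed.

Lemma prefl_G s : is_prefl s -> s \in G.
Proof. by case/andP. Qed.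

Lemma gact1 X : gact 1%g X = X.
Proof. by rewrite /Defs.gact R1 mulmx1. Qed.

Lemma gactM x y X : x \in G -> y \in G -> gact (x * y)%g X = gact x (gact y X).
Proof. by move=> hx hy; rewrite /Defs.gact RM // mulmxA. Qed.

Lemma gactK g X : g \in G -> gact g (gact (g^-1)%g X) = X.
Proof. by move=> hg; rewrite -gactM ?groupV // mulgV gact1. Qed.

Lemma Hinj i j : (H i == H j)%MS -> i = j.
Proof. by case: hH => h _ _; apply: h. Qed.

Lemma eqb_trans m1 m2 m3 (A : 'M[C]_(m1, n)) (B : 'M[C]_(m2, n)) (D : 'M[C]_(m3, n)) :
  (A == B)%MS -> (B == D)%MS -> (A == D)%MS.
Proof. by move/eqmxP=> h1 /eqmxP h2; apply/eqmxP; exact: eqmx_trans h1 h2. Qed.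

Lemma eqb_sym m1 m2 (A : 'M[C]_(m1, n)) (B : 'M[C]_(m2, n)) :
  (A == B)%MS -> (B == A)%MS.
Proof. by move/eqmxP=> h1; apply/eqmxP; exact: eqmx_sym h1. Qed.

Lemma gact_eq g X Y : (X == Y)%MS -> (gact g X == gact g Y)%MS.
Proof. by move/eqmxP=> e; apply/eqmxP; apply: eqmxMr. Qed.

Lemma fix_conj g s : g \in G -> s \in G ->
  (gact g (fixsp s) <= fixsp (s ^ g^-1)%g)%MS.
Proof.
move=> hg hs; apply/sub_kermxP.
have e : (s ^ g^-1)%g = (g * (s * g^-1))%g by rewrite /conjg invgK.
rewrite e RM ?groupM ?groupV // RM ?groupV // /Defs.gact.
set X := Defs.fixsp _ _.
have hX : X *m (R s - 1%:M) = 0 by apply/sub_kermxP.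
rewrite mulmxBr mulmx1 !mulmxA -(mulmxA X) RV // mulmx1.
move: hX; rewrite mulmxBr mulmx1 => /eqP; rewrite subr_eq0 => /eqP ->.
by rewrite subrr.
Qed.

Lemma rank_conj s g : s \in G -> g \in G ->
  \rank (R (s ^ g)%g - 1%:M) = \rank (R s - 1%:M).
Proof.
move=> hs hg.
have e : R (s ^ g)%g - 1%:M = R g *m (R s - 1%:M) *m R (g^-1)%g.
  rewrite /conjg RM ?groupV ?groupM // RM // mulmxBr mulmx1 mulmxBl RV //.
rewrite e mxrankMfree; last by rewrite row_free_unit Runit ?groupV.
have ue := Runit hg.
apply/eqP; rewrite eqn_leq mxrankM_maxr /=.
have h := mxrankM_maxr (invmx (R g)) (R g *m (R s - 1%:M)).
by rewrite mulmxA mulVmx // mul1mx in h.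
Qed.

Lemma prefl_conj s g : is_prefl s -> g \in G -> is_prefl (s ^ g)%g.
Proof.
move=> /andP[hs hr] hg; rewrite /Defs.is_prefl groupJ //=.
by rewrite rank_conj.
Qed.

Lemma fix_conj_eq g s : g \in G -> s \in G ->
  (gact g (fixsp s) == fixsp (s ^ g^-1)%g)%MS.
Proof.
move=> hg hs; apply/andP; split; first exact: fix_conj.
have hs' : (s ^ g^-1)%g \in G by rewrite groupJ ?groupV.
have := fix_conj (groupVr hg) hs'; rewrite invgK conjgKV.
move/(submxMr (R g)); rewrite -/(Defs.gact rho g _).
by rewrite gactK.
Qed.

Lemma wact_spec w i : w \in G -> (H (wact w i) == gact w (H i))%MS.
Proof.
move=> hw; case: hH => _ h2 h3.
have [s ps es] := h2 i.
have [k ek] := h3 _ (prefl_conj ps (groupVr hw)).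
have ek' : (H k == gact w (H i))%MS.
  apply: eqb_trans ek _ ; apply: eqb_sym; apply: eqb_trans (gact_eq w es) _.
  by apply: fix_conj_eq => //; apply: prefl_G.
rewrite /Defs.wact; case: pickP => [k' hk' | none] //=.
by have := none k; rewrite ek'.
Qed.

Lemma wact_eq w i j : w \in G -> (gact w (H i) == H j)%MS -> wact w i = j.
Proof. by move=> hw e; apply: Hinj; apply: eqb_trans (wact_spec i hw) e. Qed.

Lemma wact1 i : wact 1%g i = i.
Proof. by apply: wact_eq; rewrite ?group1 // gact1 submx_refl. Qed.

Lemma wactM x y i : x \in G -> y \in G -> wact (x * y)%g i = wact x (wact y i).
Proof.
move=> hx hy; apply: wact_eq; first exact: groupM.
rewrite gactM //; apply: eqb_trans (gact_eq x (eqb_sym (wact_spec i hy))) _.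
exact: eqb_sym (wact_spec _ hx).
Qed.

Lemma wactK w i : w \in G -> wact (w^-1)%g (wact w i) = i.
Proof. by move=> hw; rewrite -wactM ?groupV // mulVg wact1. Qed.

Lemma wactVK w i : w \in G -> wact w (wact (w^-1)%g i) = i.
Proof. by move=> hw; rewrite -wactM ?groupV // mulgV wact1. Qed.

Lemma wact_inj w : w \in G -> injective (wact w).
Proof. by move=> hw x y e; rewrite -(wactK x hw) e wactK. Qed.

Lemma RsetE i j s : (s \in Rset G rho H i j) = is_prefl s && (wact s j == i).
Proof.
rewrite inE; apply/andP/andP => -[ps e]; split => //.
  by apply/eqP; apply: wact_eq => //; apply: prefl_G.
have hs := prefl_G ps; move/eqP: e => <-.
exact: eqb_sym (wact_spec _ hs).
Qed.

Lemma Rset_conj w i j : w \in G ->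
  Rset G rho H (wact w i) (wact w j) =
  [set (s ^ w^-1)%g | s in Rset G rho H i j].
Proof.
move=> hw; apply/setP => t; apply/idP/imsetP.
  rewrite RsetE => /andP[pt /eqP e].
  exists (t ^ w)%g; last by rewrite conjgK.
  rewrite RsetE prefl_conj //=; apply/eqP.
  have ht := prefl_G pt.
  by rewrite /conjg !wactM ?groupV ?groupM // e wactK.
move=> [s]; rewrite !RsetE => /andP[ps /eqP e] ->.
rewrite prefl_conj ?groupV //=; apply/eqP.
have hs := prefl_G ps.
have hwv := groupVr hw.
have hsw : (s * w^-1)%g \in G by rewrite groupM.
by rewrite /conjg invgK !wactM // wactK // e.
Qed.

Lemma alpha_conj w i j : w \in G ->
  alpha G rho H mu (wact w i) (wact w j) = alpha G rho H mu i j.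
Proof.
move=> hw; rewrite /alpha Rset_conj // big_imset /=; last first.
  by move=> x y _ _; apply: conjg_inj.
apply: eq_bigr => s; rewrite RsetE => /andP[ps _].
by case: hU => _ h _; apply: h => //; rewrite groupV.
Qed.

Lemma tau_conj w i : w \in G -> tau (wact w i) = tau i.
Proof. by case: hU => _ _ h; apply: h. Qed.


Lemma fix_mul m (X : 'M[C]_(m, n)) s : (X <= fixsp s)%MS -> X *m R s = X.
Proof.
by move/sub_kermxP; rewrite mulmxBr mulmx1 => /eqP; rewrite subr_eq0 => /eqP.
Qed.

Lemma cross_key i j s : i != j -> s \in Rset G rho H i j ->
  exists k, [/\ (H k == fixsp s)%MS, k != i, k != j &
    forall m (X : 'M[C]_(m, n)), (X <= H i)%MS -> (X <= H j)%MS -> (X <= H k)%MS].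
Proof.
move=> nij; rewrite inE => /andP[ps hs].
have hsG := prefl_G ps.
have uM : R s \in unitmx := Runit hsG.
move: hs; rewrite /Defs.gact => hs.
have rkM : \rank (H j *m R s) = \rank (H j) by rewrite mxrankMfree // row_free_unit.
have rkij : \rank (H i) = \rank (H j) by rewrite -(eqmx_rank hs).
have c1 : ~ (H i *m R s <= H i)%MS.
  move=> h.
  have h1 : (H i <= H j)%MS.
    have h2 : (H i *m R s <= H j *m R s)%MS.
      by apply: submx_trans h _; case/andP: hs.
    by move/(submxMr (invmx (R s))): h2; rewrite !mulmxK.
  have e : (H i == H j)%MS by rewrite -(geq_leqif (mxrank_leqif_eq h1)) rkij.
  by move: nij; rewrite (Hinj e) eqxx.
have c2 : ~ (H j *m R s <= H j)%MS.
  move=> h.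
  have h1 : (H i <= H j)%MS by apply: submx_trans h; case/andP: hs.
  have e : (H i == H j)%MS by rewrite -(geq_leqif (mxrank_leqif_eq h1)) rkij.
  by move: nij; rewrite (Hinj e) eqxx.
case: hH => _ _ h3; have [k ek] := h3 _ ps.
have fk : (H k <= fixsp s)%MS by case/andP: ek.
have kf : (fixsp s <= H k)%MS by case/andP: ek.
exists k; split => //.
- apply/eqP => ki; apply: c1; rewrite -ki fix_mul //.
- apply/eqP => kj; apply: c2; rewrite -kj fix_mul //.
move=> m X Xi Xj; apply: submx_trans kf; apply/sub_kermxP.
set Z := X *m (R s - 1%:M).
have [//|nZ] := eqVneq Z 0.
exfalso; apply: c1.
have ZA : (Z <= R s - 1%:M)%MS by apply: submxMl.
have Zi : (Z <= H i)%MS.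
  rewrite /Z mulmxBr mulmx1; apply: addmx_sub; last by rewrite eqmx_opp.
  by apply: submx_trans (submxMr _ Xj) _; case/andP: hs.
have rk1 : \rank (R s - 1%:M) = 1%N by case/andP: ps => _ /eqP.
have AZ : (R s - 1%:M <= Z)%MS.
  rewrite -(geq_leqif (mxrank_leqif_sup ZA)) rk1 lt0n mxrank_eq0 //.
have Ai := submx_trans AZ Zi.
have -> : H i *m R s = H i *m (R s - 1%:M) + H i by rewrite mulmxBr mulmx1 subrK.
by apply: addmx_sub => //; apply: submx_trans (submxMl _ _) Ai.
Qed.

Lemma cross_empty i j : crossing_pair H i j -> Rset G rho H i j = set0.
Proof.
move=> /andP[nij /forallP hk]; apply/setP => s; rewrite in_set0.
apply/negP => hs.
have [k [_ ki kj hX]] := cross_key nij hs.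
have := hk k; rewrite hX ?capmxSl ?capmxSr //=.
by rewrite (negPf ki) (negPf kj).
Qed.

Lemma cross_empty' i j : crossing_pair H i j -> Rset G rho H j i = set0.
Proof.
move=> /andP[nij /forallP hk]; apply/setP => s; rewrite in_set0.
apply/negP => hs.
have nji : j != i by rewrite eq_sym.
have [k [_ ki kj hX]] := cross_key nji hs.
have := hk k; rewrite hX ?capmxSl ?capmxSr //=.
by rewrite (negPf ki) (negPf kj).
Qed.


Local Notation T := (iotaV rho H).
Local Notation E := (pmx G rho H mu tau).
Local Notation alp := (alpha G rho H mu).

Definition coef i p := if p == i then tau i else alp i p.

Lemma coef_conj w i p : w \in G -> coef (wact w i) (wact w p) = coef i p.
Proof.
by move=> hw; rewrite /coef (inj_eq (wact_inj hw)) tau_conj ?alpha_conj.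
Qed.

Lemma sum_single (F : 'I_#|P| -> C) p :
  (forall c, enum_val c != p -> F c = 0) -> \sum_c F c = F (enum_rank p).
Proof.
move=> hF; rewrite (bigD1 (enum_rank p)) //= big1 ?addr0 // => c hc.
apply: hF; apply: contra hc => /eqP <-; by rewrite enum_valK.
Qed.

Lemma TE w a b : T w a b = (wact w (enum_val b) == enum_val a)%:R.
Proof. by rewrite mxE. Qed.

Lemma EE i a b : E i a b = if enum_val a == i then coef i (enum_val b) else 0.
Proof. by rewrite mxE. Qed.

Lemma TT x y a b : (T x *m T y) a b = (wact x (wact y (enum_val b)) == enum_val a)%:R.
Proof.
rewrite mxE (sum_single (p := wact y (enum_val b))) => [|c hc].
  by rewrite !TE enum_rankK eqxx mulr1.
by rewrite eq_sym in hc; rewrite (TE y) (negPf hc) mulr0.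
Qed.

Lemma TEm w j a b : (T w *m E j) a b = (wact w j == enum_val a)%:R * coef j (enum_val b).
Proof.
rewrite mxE (sum_single (p := j)) => [|c hc].
  by rewrite TE EE enum_rankK eqxx.
by rewrite EE (negPf hc) mulr0.
Qed.

Lemma ETm i w a b : (E i *m T w) a b =
  if enum_val a == i then coef i (wact w (enum_val b)) else 0.
Proof.
rewrite mxE (sum_single (p := wact w (enum_val b))) => [|c hc].
  by rewrite TE EE enum_rankK eqxx mulr1.
by rewrite eq_sym in hc; rewrite TE (negPf hc) mulr0.
Qed.

Lemma EEm i j a b : (E i *m E j) a b =
  if enum_val a == i then coef i j * coef j (enum_val b) else 0.
Proof.
rewrite mxE (sum_single (p := j)) => [|c hc].
  by rewrite !EE enum_rankK eqxx; case: ifP; rewrite ?mul0r.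
by rewrite (EE j) (negPf hc) mulr0.
Qed.

Lemma rel3 w i j : w \in G -> wact w j = i -> T w *m E j = E i *m T w.
Proof.
move=> hw wj; apply/matrixP => a b; rewrite TEm ETm -wj coef_conj //.
by rewrite eq_sym; case: eqP; rewrite ?mul1r ?mul0r.
Qed.

Lemma relfix w i : w \in G -> wact w i = i -> T w *m E i = E i /\ E i *m T w = E i.
Proof.
move=> hw wi.
have h : T w *m E i = E i.
  apply/matrixP => a b; rewrite TEm EE wi eq_sym.
  by case: eqP; rewrite ?mul1r ?mul0r.
by split => //; rewrite -(rel3 hw wi).
Qed.

Lemma sgen_fix i : sgen G rho H i \in G /\ wact (sgen G rho H i) i = i.
Proof.
rewrite /sgen; case: pickP => [g /andP[hg _] | _] /=; last by rewrite group1 wact1.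
move: hg; rewrite inE => /andP[hg /eqP e]; split => //.
apply: wact_eq => //; rewrite /Defs.gact.
move: e; rewrite mulmxBr mulmx1 => /eqP; rewrite subr_eq0 => /eqP ->.
by apply/andP; split; apply: submx_refl.
Qed.

Lemma alpha_empty i j : Rset G rho H i j = set0 -> alp i j = 0.
Proof. by move=> e; rewrite /alpha e big_set0. Qed.

End Proof5p2.

Theorem theorem5p2 (C : numClosedFieldType) (n : nat) (gT : finGroupType)
    (G : {group gT}) (rho : gT -> 'M[C]_n) (P : finType) (H : P -> 'M[C]_n)
    (mu : gT -> C) (tau : P -> C)
    (hG : pseudo_reflection_group G rho)
    (hH : reflecting_hyperplanes_indexing G rho H)
    (hU : admissible G rho H mu tau) :
  BG_rep G rho H mu tau (iotaV rho H) (pmx G rho H mu tau).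
Proof.
split.
- apply/matrixP => a b; rewrite TE (wact1 hG hH) // !mxE (inj_eq enum_val_inj).
  by rewrite eq_sym.
- move=> x y hx hy; apply/matrixP => a b.
  by rewrite TT TE (wactM hG hH).
- move=> i; have [hs hf] := sgen_fix hG hH i; exact: (relfix hG hH hU).
- move=> w i hw e _; apply: (relfix hG hH hU) => //; apply: (wact_eq hG hH) => //.
split.
- move=> i; apply/matrixP => a b; rewrite EEm mxE EE /coef eqxx.
  by case: ifP; rewrite ?mulr0.
- move=> w i j hw e; apply: (rel3 hG hH hU) => //; exact: (wact_eq hG hH).
- move=> i j cij; apply/matrixP => a b; rewrite !EEm.
  have nij : j != i by case/andP: cij; rewrite eq_sym.
  have nji : i != j by case/andP: cij.
  rewrite /coef (negPf nij) (negPf nji).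
  rewrite (alpha_empty mu (cross_empty hG hH cij)).
  rewrite (alpha_empty mu (cross_empty' hG hH cij)).
  by rewrite !mul0r !if_same.
- move=> i j nij _ _.
  have nji : j != i by rewrite eq_sym.
  pose N : 'M[C]_#|P| := \matrix_(a, b) (if enum_val a == i then coef G rho H mu tau j (enum_val b) else 0).
  have hN : forall s, s \in Rset G rho H i j -> iotaV rho H s *m pmx G rho H mu tau j = N.
    move=> s; rewrite (RsetE hG hH) => /andP[_ /eqP e]; apply/matrixP => a b.
    by rewrite TEm e mxE eq_sym; case: ifP; rewrite ?mul1r ?mul0r.
  have h1 : (\sum_(s in Rset G rho H i j) mu s *: iotaV rho H s) *m pmx G rho H mu tau j
           = alpha G rho H mu i j *: N.
    rewrite mulmx_suml /alpha scaler_suml; apply: eq_bigr => s hs.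
    by rewrite -scalemxAl hN.
  have h0 : pmx G rho H mu tau i *m pmx G rho H mu tau j = alpha G rho H mu i j *: N.
    apply/matrixP => a b; rewrite EEm !mxE /coef (negPf nji).
    by case: ifP; rewrite ?mulr0.
  split; first by rewrite h0 h1.
  rewrite h0 -h1 mulmx_suml mulmx_sumr; apply: eq_bigr => s hs.
  rewrite -scalemxAl -scalemxAr (rel3 hG hH hU (i := i) (j := j) (w := s)) //.
    by move: hs; rewrite (RsetE hG hH) => /andP[/prefl_G].
  by move: hs; rewrite (RsetE hG hH) => /andP[_ /eqP].
- move=> i j nij _ e; apply/matrixP => a b.
  have nji : j != i by rewrite eq_sym.
  rewrite EEm /coef (negPf nji) (alpha_empty mu e) mxE.
  by case: ifP; rewrite ?mul0r.
Qed.
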